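(* Let $(q_i,P_i)_{i\in\mathcal I}$ be a mechanism with finite message sets $M_i$ and opt-out messages, let $\alpha_i(m_i'\mid m_i)\ge0$ be nonnegative numbers, and let $\epsilon>0$. Then there exist $a>0$, an integer $k\ge1$ and a mechanism $(\tilde q_i,\tilde P_i)_{i\in\mathcal I}$ with message sets $\tilde M_i=\{0,1,\ldots,k\}$ for every $i$ (with $0$ the opt-out message), such that, with the dual variables $\tilde\alpha_i(j'\mid j)=a$ if $j'=j+1$ and $\tilde\alpha_i(j'\mid j)=0$ otherwise, the virtual revenue $\widetilde{\mathrm{Rev}}$ of $(\tilde q_i,\tilde P_i,\tilde\alpha_i)$ satisfies $$\widetilde{\mathrm{Rev}}(v,\tilde m)\ge\min_{m\in M}\mathrm{Rev}(v,m)-I\epsilon\quad\text{for all }v\in V,\ \tilde m\in\prod_i\tilde M_i,$$ where $\mathrm{Rev}$ is the virtual revenue of $(q_i,P_i,\alpha_i)$. Moreover, if a mechanism with $M_i=\{0,\ldots,k\}$ for all $i$ is paired with such $\tilde\alpha_i$ (the same for all $i$), then its symmetrization $\tilde q_1(m')=\frac1{I!}\sum_\sigma q_{\sigma(1)}(m_{\sigma(1)}=m_1',\ldots,m_{\sigma(I)}=m_I')$ (and similarly for payments and other buyers, summing over permutations $\sigma$ of $\{1,\ldots,I\}$) has virtual revenue at least $\min_m\mathrm{Rev}(v,m)$ at every $(v,m)$.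
   Context: A mechanism for buyers $\mathcal I=\{1,\ldots,I\}$ with common value $v\in V=\{0,\nu,\ldots,1\}$ consists of finite message sets $M_i$ ($M=\prod_iM_i$), allocation rules $q_i:M\to[0,1]$ with $\sum_iq_i(m)\le1$, and payment rules $P_i:M\to\mathbb R$, where each $M_i$ contains an opt-out message $0$ with $q_i(0,m_{-i})=P_i(0,m_{-i})=0$ for all $m_{-i}$. $U_i(v,m)=v\,q_i(m)-P_i(m)$. Virtual revenue associated with nonnegative numbers $\alpha_i(m_i'\mid m_i)$: $\mathrm{Rev}(v,m)=\sum_i\Big(P_i(m)+\sum_{m_i'\in M_i}\big(U_i(v,(m_i',m_{-i}))-U_i(v,m)\big)\alpha_i(m_i'\mid m_i)\Big)$. *)

(* Defs.v *)
From HB Require Import structures.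
From mathcomp Require Import all_boot all_order fingroup perm all_algebra.
Set Implicit Arguments. Unset Strict Implicit. Unset Printing Implicit Defensive.
Import Order.TTheory GRing.Theory Num.Theory.
Local Open Scope ring_scope.

Section Mech.
Variables (R : archiRealFieldType) (n : nat) (M : 'I_n -> finType)
  (o : forall i, M i).

Definition profile := {dffun forall i : 'I_n, M i}.

Definition optout : profile := finfun o.

Definition upd (m : profile) (i : 'I_n) (x : M i) : profile :=
  finfun (dfwith (fun j => m j) x).

Definition is_mechanism (q P : 'I_n -> profile -> R) : Prop :=
  [/\ (forall i m, 0 <= q i m <= 1),
      (forall m, \sum_(i < n) q i m <= 1) &
      (forall i (m : profile), m i = o i -> q i m = 0 /\ P i m = 0)].

Definition util (q P : 'I_n -> profile -> R) (i : 'I_n) (v : R) (m : profile) : R :=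
  v * q i m - P i m.

(* alpha i x y = alpha_i(x | y) *)
Definition virtual_revenue (q P : 'I_n -> profile -> R)
    (alpha : forall i, M i -> M i -> R) (v : R) (m : profile) : R :=
  \sum_(i < n) (P i m + \sum_(x : M i)
       (util q P i v (@upd m i x) - util q P i v m) * alpha i x (m i)).

(* min_{m in M} Rev(v, m)  (M is nonempty since it contains optout) *)
Definition min_revenue (q P : 'I_n -> profile -> R)
    (alpha : forall i, M i -> M i -> R) (v : R) : R :=
  \big[Num.min/virtual_revenue q P alpha v optout]_(m : profile)
     virtual_revenue q P alpha v m.

End Mech.

Definition Mk (n k : nat) : 'I_n -> finType := fun _ => 'I_k.+1.
Arguments Mk : clear implicits.
Definition ok0 (n k : nat) : forall i : 'I_n, Mk n k i := fun _ => ord0.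
Arguments ok0 : clear implicits.

Definition alpha_succ (R : archiRealFieldType) (n k : nat) (a : R) :
    forall i : 'I_n, Mk n k i -> Mk n k i -> R :=
  fun _ (j' j : 'I_k.+1) => if (j' : nat) == j.+1 then a else 0.

Definition inV (R : archiRealFieldType) (N : nat) (v : R) : Prop :=
  exists j : 'I_N.+1, v = j%:R / N%:R.

(* symmetrization: f~_i(m') = 1/n! sum_sigma f_{sigma(i)}(m' o sigma^-1),
   i.e. the profile m with m_{sigma(j)} = m'_j *)
Definition symmetrize (R : archiRealFieldType) (n k : nat)
    (f : 'I_n -> profile (Mk n k) -> R) : 'I_n -> profile (Mk n k) -> R :=
  fun i m' => (n`!%:R)^-1 *
    \sum_(s : 'S_n) f (s i) (finfun (fun j : 'I_n => (m' : profile (Mk n k)) ((s^-1)%g j))).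

(* Main.v *)
Require Import Defs.
From HB Require Import structures.
From mathcomp Require Import all_boot all_order fingroup perm all_algebra.
Import Order.TTheory GRing.Theory Num.Theory.
Local Open Scope ring_scope.
Set Implicit Arguments. Unset Strict Implicit. Unset Printing Implicit Defensive.
From mathcomp Require Import ring lra zify.
Local Open Scope ring_scope.

Section Prof.
Variables (R : archiRealFieldType) (n : nat) (M : 'I_n -> finType).
Notation prof := (profile M).

Lemma updE (m : prof) i (x : M i) : upd m x i = x.
Proof. by rewrite /upd ffunE dfwith_in. Qed.

Lemma updO (m : prof) i (x : M i) j : i != j -> upd m x j = m j.
Proof. by move=> ij; rewrite /upd ffunE dfwith_out. Qed.

Lemma upd_id (m : prof) i : upd m (m i) = m.
Proof.
apply/ffunP => j; rewrite ffunE; case: (eqVneq i j) => [<-|ij].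
  by rewrite dfwith_in.
by rewrite dfwith_out.
Qed.

Lemma upd_upd (m : prof) i (x y : M i) : upd (upd m x) y = upd m y.
Proof.
apply/ffunP => j; rewrite /upd !ffunE; case: (eqVneq i j) => [<-|ij].
  by rewrite !dfwith_in.
by rewrite !dfwith_out // ffunE dfwith_out.
Qed.

Lemma swap_sum i (G : prof -> M i -> R) :
  \sum_(m : prof) \sum_(x : M i) G m x = \sum_(m : prof) \sum_(z : M i) G (upd m z) (m i).
Proof.
rewrite !pair_bigA /=.
pose phi := fun p : prof * M i => (upd p.1 p.2, p.1 i).
have phiK : involutive phi.
  by case=> m x; rewrite /phi /= upd_upd upd_id updE.
rewrite (reindex_inj (inv_inj phiK)) /=.
by apply: eq_bigr => -[m x] _.
Qed.
Lemma sum_prod (f : forall i, M i -> R) :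
  \sum_(m : prof) \prod_(i < n) f i (m i) = \prod_(i < n) \sum_(y : M i) f i y.
Proof.
pose P_ := fun i => [ffun y : M i => f i y].
rewrite (reindex (@dffun_of_fprod _ M)); last exact/onW_bij/dffun_of_fprod_bij.
transitivity (\sum_(t : fprod M) \prod_(i < n) P_ i (t i)).
  by apply: eq_bigr => t _; apply: eq_bigr => i _; rewrite !ffunE.
rewrite big_fprod.
rewrite -(bigA_distr_big_dep (fun i => tagged_with M i) (fun i j => untag 0 (P_ i) j)).
apply: eq_bigr => i _.
rewrite (big_tag (fun i y => f i y)). apply: eq_bigr => x _.
by rewrite /untag; case: eqP => // e; rewrite ffunE.
Qed.
End Prof.

Lemma bin_up m l : (l < m)%N -> ((binomial (2 * m) (l)) <= (binomial (2 * m) (l.+1)))%N.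
Proof.
move=> lm; have H := mul_bin_left (2 * m) l.
have : (l.+1 * (binomial (2 * m) (l)) <= l.+1 * (binomial (2 * m) (l.+1)))%N.
  rewrite H leq_mul2r; apply/orP; right; lia.
by rewrite leq_mul2l.
Qed.

Lemma bin_down m l : (m <= l)%N -> ((binomial (2 * m) (l.+1)) <= (binomial (2 * m) (l)))%N.
Proof.
move=> lm; have H := mul_bin_left (2 * m) l.
have : (l.+1 * (binomial (2 * m) (l.+1)) <= l.+1 * (binomial (2 * m) (l)))%N.
  rewrite H leq_mul2r; apply/orP; right; lia.
by rewrite leq_mul2l.
Qed.

Lemma central_rec m : (m.+1 * (binomial (2 * m.+1) (m.+1)) = 2 * (2 * m).+1 * (binomial (2 * m) (m)))%N.
Proof.
have h1 := mul_bin_diag (2 * m.+1) m.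
have h2 := mul_bin_diag (2 * m).+1 m.
have h3 : (binomial ((2 * m).+1) (m.+1)) = (binomial ((2 * m).+1) (m)).
  by rewrite -(bin_sub (_ : m <= (2 * m).+1)%N); [congr binomial; lia| lia].
have e : (2 * m.+1).-1 = (2 * m).+1 by lia.
rewrite e in h1; rewrite /= in h2.
rewrite -h1; rewrite h3 in h2; nia.
Qed.

Lemma central_bound m : ((binomial (2 * m) (m)) ^ 2 * m.+1 <= 16 ^ m)%N.
Proof.
elim: m => [|m IH]; first by rewrite muln0 bin0.
set X := (binomial (2 * m) (m)) in IH *; set Y := (binomial (2 * m.+1) (m.+1)).
have hr := central_rec m; rewrite -/X -/Y in hr.
have key : (Y ^ 2 * m.+2 * (m.+1 ^ 3) <= 16 ^ m.+1 * (m.+1 ^ 3))%N.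
  have -> : (Y ^ 2 * m.+2 * m.+1 ^ 3 = (m.+1 * Y) ^ 2 * m.+2 * m.+1)%N by ring.
  rewrite hr.
  have -> : ((2 * (2 * m).+1 * X) ^ 2 * m.+2 * m.+1 = (X ^ 2 * m.+1) * (4 * (2 * m).+1 ^ 2 * m.+2))%N by ring.
  apply: (leq_trans (leq_mul IH (leqnn _))).
  have hp : (4 * (2 * m).+1 ^ 2 * m.+2 <= 16 * m.+1 ^ 3)%N by nia.
  apply: (leq_trans (leq_mul (leqnn (16 ^ m)) hp)); by rewrite (expnS 16 m) mulnCA mulnA.
by rewrite leq_mul2r in key; case/orP: key => // /eqP; rewrite expn_eq0.
Qed.

Definition bc (R : numFieldType) (j l : nat) : R := (binomial j l)%:R / (2 ^ j)%:R.

Lemma absdiff_sum (R : numFieldType) m :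
  \sum_(l < (2 * m).+2) `|(binomial (2 * m).+1 l)%:R - 2 * (binomial (2 * m) l)%:R| = 2 * (binomial (2 * m) m)%:R :> R.
Proof.
set g := fun l => (binomial (2 * m) l)%:R : R.
rewrite big_ord_recl /= bin0 /=.
have -> : \sum_(i < (2 * m).+1) `|(binomial (2 * m).+1 (bump 0 i))%:R - 2 * (binomial (2 * m) (bump 0 i))%:R| =
          \sum_(0 <= i < (2 * m).+1) `|g i - g i.+1| :> R.
  rewrite big_mkord; apply: eq_bigr => i _; rewrite /bump /= add1n binS natrD /g.
  congr `|_|; ring.
rewrite (big_cat_nat (n := m)) /=; [|lia|lia].
have -> : \sum_(0 <= i < m) `|g i - g i.+1| = g m - g 0.
  rewrite -telescope_sumr //; apply: eq_big_nat => i /andP[_ im].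
  rewrite distrC ger0_norm // subr_ge0 ler_nat; exact: bin_up.
have -> : \sum_(m <= i < (2 * m).+1) `|g i - g i.+1| = g m - g (2 * m).+1.
  rewrite -opprB -telescope_sumr; last lia.
  rewrite -sumrN; apply: eq_big_nat => i /andP[mi _].
  rewrite ger0_norm ?opprB // subr_ge0 ler_nat; exact: bin_down.
rewrite /g bin0 (@bin_small (2 * m) (2 * m).+1) //.
have -> : `|1%:R - 2 * 1%:R| = 1 :> R by rewrite mulr1 (_ : 1%:R = 1 :> R) // -opprB (_ : 2 - 1 = 1 :> R) ?normrN ?normr1 //; ring.
ring.
Qed.

Lemma D_eq (R : numFieldType) m :
  \sum_(l < (2 * m).+2) `|bc R (2 * m).+1 l - bc R (2 * m) l| =
  (binomial (2 * m) m)%:R / (4 ^ m)%:R.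
Proof.
have h2 : (2 ^ (2 * m).+1)%:R = 2 * (4 ^ m)%:R :> R.
  by rewrite expnS expnM natrM.
have h1 : (2 ^ (2 * m))%:R = (4 ^ m)%:R :> R by rewrite expnM.
have hp : (0 : R) < (4 ^ m)%:R by rewrite ltr0n expn_gt0.
transitivity (\sum_(l < (2 * m).+2)
   `|(binomial (2 * m).+1 l)%:R - 2 * (binomial (2 * m) l)%:R| / (2 * (4 ^ m)%:R) : R).
  apply: eq_bigr => l _.
  have hq : (2 * (4 ^ m)%:R : R) != 0 by rewrite mulf_neq0 // gt_eqF.
  have e : bc R (2 * m).+1 l - bc R (2 * m) l =
     ((binomial (2 * m).+1 l)%:R - 2 * (binomial (2 * m) l)%:R) * (2 * (4 ^ m)%:R)^-1.
    rewrite /bc h2 h1; field. all: try by rewrite gt_eqF.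
  rewrite e normrM (ger0_norm (_ : 0 <= (2 * (4 ^ m)%:R)^-1 :> R)) //.
  by rewrite invr_ge0 mulr_ge0 // ltW.
rewrite -mulr_suml absdiff_sum; field.
by rewrite gt_eqF.
Qed.

Lemma c_bound (R : numFieldType) m :
  ((binomial (2 * m) m)%:R / (4 ^ m)%:R) ^+ 2 * (m.+1)%:R <= 1 :> R.
Proof.
have hp : (0 : R) < (4 ^ m)%:R by rewrite ltr0n expn_gt0.
rewrite expr_div_n -mulrAC ler_pdivrMr ?exprn_gt0 // mul1r.
rewrite -natrX -natrM -natrX ler_nat -expnM.
have -> : (4 ^ (m * 2) = 16 ^ m)%N by rewrite mulnC expnM.
exact: central_bound.
Qed.


Section Chain.
Variables (R : archiRealFieldType) (T : finType) (alpha : T -> T -> R) (o : T) (a : R).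
Hypothesis alpha_ge0 : forall x y, 0 <= alpha x y.
Hypothesis a_gt0 : 0 < a.
Hypothesis a_big : forall y, 2 * \sum_(x : T) alpha x y <= a.

Definition Ssum (y : T) : R := \sum_(x : T) alpha x y.
Definition K (y z : T) : R := 2 * alpha z y / a + (if z == y then 1 - 2 * Ssum y / a else 0).

Lemma K_ge0 y z : 0 <= K y z.
Proof.
rewrite /K; apply: addr_ge0; first by rewrite divr_ge0 ?mulr_ge0 // ltW.
case: eqP => // _; rewrite subr_ge0 ler_pdivrMr // mul1r; exact: a_big.
Qed.

Lemma K_gen y (h : T -> R) :
  \sum_(z : T) K y z * h z - h y = 2 / a * \sum_(z : T) alpha z y * (h z - h y).
Proof.
rewrite /K.
under eq_bigr do rewrite mulrDl.
rewrite big_split /=.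
have -> : \sum_(i : T) (if i == y then 1 - 2 * Ssum y / a else 0) * h i = (1 - 2 * Ssum y / a) * h y.
  rewrite (bigD1 y) //= eqxx big1 ?addr0 // => i /negPf ->; exact: mul0r.
have -> : 2 / a * \sum_(z : T) alpha z y * (h z - h y) =
    \sum_(z : T) 2 * alpha z y / a * h z - 2 / a * Ssum y * h y.
  rewrite /Ssum mulr_sumr mulr_sumr mulr_suml -sumrB; apply: eq_bigr => z _; ring.
ring.
Qed.

Lemma K_sum1 y : \sum_(z : T) K y z = 1.
Proof.
have h := K_gen y (fun _ => 1).
rewrite [X in _ = _ * X]big1 in h; last by move=> z _; rewrite subrr mulr0.
move/eqP: h; rewrite mulr0 subr_eq0 => /eqP <-.
by apply: eq_bigr => z _; rewrite mulr1.
Qed.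

Fixpoint mu (l : nat) : T -> R :=
  if l is l'.+1 then fun z => \sum_(y : T) mu l' y * K y z else fun y => (y == o)%:R.

Fixpoint nu (j : nat) : T -> R :=
  if j is j'.+1 then fun z => (nu j' z + \sum_(y : T) nu j' y * K y z) / 2
  else fun y => (y == o)%:R.

Lemma mu_ge0 l y : 0 <= mu l y.
Proof.
elim: l y => [|l IH] y /=; first by rewrite ler0n.
by apply: sumr_ge0 => x _; rewrite mulr_ge0 ?K_ge0.
Qed.

Lemma nu_ge0 j y : 0 <= nu j y.
Proof.
elim: j y => [|j IH] y /=; first by rewrite ler0n.
by rewrite divr_ge0 // addr_ge0 // sumr_ge0 // => x _; rewrite mulr_ge0 ?K_ge0.
Qed.

Lemma sum_delta : \sum_(y : T) (y == o)%:R = 1 :> R.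
Proof. by rewrite (bigD1 o) //= eqxx big1 ?addr0 // => y /negPf ->. Qed.

Lemma sumK (f : T -> R) : \sum_(z : T) \sum_(y : T) f y * K y z = \sum_(y : T) f y.
Proof.
rewrite exchange_big /=; apply: eq_bigr => y _.
by rewrite -mulr_sumr K_sum1 mulr1.
Qed.

Lemma mu_sum1 l : \sum_(y : T) mu l y = 1.
Proof. by elim: l => [|l IH] /=; [exact: sum_delta | rewrite sumK]. Qed.

Lemma nu_sum1 j : \sum_(y : T) nu j y = 1.
Proof.
elim: j => [|j IH] /=; first exact: sum_delta.
by rewrite -mulr_suml big_split /= sumK IH; field.
Qed.

Lemma bcS j i : bc R j.+1 i.+1 = (bc R j i.+1 + bc R j i) / 2.
Proof.
rewrite /bc binS natrD expnS natrM; field.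
by rewrite pnatr_eq0 expn_eq0.
Qed.

Lemma bc_out j i : (j < i)%N -> bc R j i = 0.
Proof. by move=> ji; rewrite /bc bin_small // mul0r. Qed.

Lemma bc0S j : bc R j.+1 0 = bc R j 0 / 2.
Proof.
rewrite /bc !bin0 expnS natrM; field.
by rewrite pnatr_eq0 expn_eq0.
Qed.

Lemma nu_bc j z : nu j z = \sum_(l < j.+1) bc R j l * mu l z.
Proof.
elim: j z => [|j IH] z.
  by rewrite big_ord1 /bc /= bin0 expn0 divr1 mul1r.
have e1 : \sum_(y : T) nu j y * K y z = \sum_(l < j.+1) bc R j l * mu l.+1 z.
  under eq_bigr do rewrite IH mulr_suml.
  rewrite exchange_big /=; apply: eq_bigr => l _.
  by rewrite mulr_sumr; apply: eq_bigr => y _; rewrite mulrA.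
rewrite [nu j.+1 z]/= e1 IH (big_ord_recl j) [in RHS]big_ord_recl.
have e2 : \sum_(i < j) bc R j (bump 0 i) * mu (bump 0 i) z =
          \sum_(i < j.+1) bc R j i.+1 * mu i.+1 z.
  rewrite [in RHS]big_ord_recr /= bc_out // mul0r addr0.
  by apply: eq_bigr => i _; rewrite /bump.
rewrite e2 bc0S.
have e3 : \sum_(i < j.+1) bc R j.+1 (bump 0 i) * mu (bump 0 i) z =
   (\sum_(i < j.+1) bc R j i.+1 * mu i.+1 z) / 2 + (\sum_(i < j.+1) bc R j i * mu i.+1 z) / 2.
  rewrite !mulr_suml -big_split /=; apply: eq_bigr => i _.
  rewrite /bump add1n bcS; ring.
rewrite e3; ring.
Qed.


Lemma nu_diff j z : nu j.+1 z - nu j z = \sum_(l < j.+2) (bc R j.+1 l - bc R j l) * mu l z.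
Proof.
rewrite !nu_bc.
have -> : \sum_(l < j.+1) bc R j l * mu l z = \sum_(l < j.+2) bc R j l * mu l z.
  by rewrite [RHS]big_ord_recr /= bc_out // mul0r addr0.
rewrite -sumrB; apply: eq_bigr => l _; ring.
Qed.

End Chain.

Unset Implicit Arguments.

Section Ladder.
Variables (R : archiRealFieldType) (n : nat) (M : 'I_n -> finType) (o : forall i, M i)
  (alpha : forall i, M i -> M i -> R) (a : R).
Hypothesis alpha_ge0 : forall i x y, 0 <= alpha i x y.
Hypothesis a_gt0 : 0 < a.
Hypothesis a_big : forall i y, 2 * \sum_(x : M i) alpha i x y <= a.
Notation prof := (profile M).

Definition nuI i j := nu (alpha i) (o i) a j.
Definition muI i l := mu (alpha i) (o i) a l.

Definition w (t : 'I_n -> nat) (m : prof) : R := \prod_(l < n) nuI l (t l) (m l).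
Definition rest (t : 'I_n -> nat) i (m : prof) : R :=
  \prod_(l < n | l != i) nuI l (t l) (m l).

Lemma w_split t i m : w t m = nuI i (t i) (m i) * rest t i m.
Proof. by rewrite /w (bigD1 i). Qed.

Lemma rest_upd t i m (z : M i) : rest t i (upd m z) = rest t i m.
Proof. by apply: eq_bigr => l li; rewrite updO // eq_sym. Qed.

Lemma rest_ge0 t i m : 0 <= rest t i m.
Proof. by apply: prodr_ge0 => l _; apply: nu_ge0. Qed.

Lemma w_ge0 t m : 0 <= w t m.
Proof. by apply: prodr_ge0 => l _; apply: nu_ge0. Qed.

Lemma w_sum1 t : \sum_(m : prof) w t m = 1.
Proof.
rewrite /w (sum_prod (fun l y => nuI l (t l) y)) big1 // => l _.
exact: nu_sum1.
Qed.

Lemma split_sum i (c : M i) (F : prof -> R) :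
  \sum_(m : prof) F m = \sum_(m : prof) (m i == c)%:R * \sum_(y : M i) F (upd m y).
Proof.
under [RHS]eq_bigr do rewrite mulr_sumr.
rewrite (swap_sum (fun m y => (m i == c)%:R * F (upd m y))).
apply: eq_bigr => m _.
under eq_bigr do rewrite updE upd_upd upd_id.
rewrite -mulr_suml.
by rewrite (bigD1 c) //= eqxx big1 ?addr0 ?mul1r // => y /negPf ->.
Qed.

Lemma marg t i (phi : M i -> R) :
  \sum_(m : prof) phi (m i) * rest t i m = \sum_(y : M i) phi y.
Proof.
have gen : forall psi : M i -> R, \sum_(m : prof) psi (m i) * rest t i m =
    (\sum_(y : M i) psi y) * \sum_(m : prof) (m i == o i)%:R * rest t i m.
  move=> psi; rewrite (@split_sum i (o i)) mulr_sumr; apply: eq_bigr => m _.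
  under eq_bigr do rewrite updE rest_upd.
  by rewrite -mulr_suml; ring.
have h := gen (nuI i (t i)).
have e : \sum_(m : prof) nuI i (t i) (m i) * rest t i m = 1.
  by under eq_bigr do rewrite -w_split; exact: w_sum1.
rewrite e nu_sum1 mul1r in h.
by rewrite gen -h mulr1.
Qed.

Lemma step t i j (F : prof -> R) :
  \sum_(m : prof) nuI i j.+1 (m i) * rest t i m * F m
  - \sum_(m : prof) nuI i j (m i) * rest t i m * F m =
  a^-1 * \sum_(m : prof) nuI i j (m i) * rest t i m *
     \sum_(z : M i) alpha i z (m i) * (F (upd m z) - F m).
Proof.
pose Kt := K (alpha i) a.
have e0 : forall y, nuI i j.+1 y = (nuI i j y + \sum_(x : M i) nuI i j x * Kt x y) / 2 by [].
have e1 : \sum_(m : prof) (\sum_(y : M i) nuI i j y * Kt y (m i)) * rest t i m * F m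
   = \sum_(m : prof) nuI i j (m i) * rest t i m * \sum_(z : M i) Kt (m i) z * F (upd m z).
  under eq_bigr do rewrite mulr_suml mulr_suml.
  rewrite (swap_sum (fun m y => nuI i j y * Kt y (m i) * rest t i m * F m)).
  apply: eq_bigr => m _; rewrite mulr_sumr; apply: eq_bigr => z _.
  rewrite updE rest_upd; ring.
have e2 : \sum_(m : prof) nuI i j.+1 (m i) * rest t i m * F m
  - \sum_(m : prof) nuI i j (m i) * rest t i m * F m =
  (\sum_(m : prof) (\sum_(y : M i) nuI i j y * Kt y (m i)) * rest t i m * F m
   - \sum_(m : prof) nuI i j (m i) * rest t i m * F m) / 2.
  rewrite -!sumrB mulr_suml; apply: eq_bigr => m _; by rewrite e0; field.
rewrite e2 e1 -sumrB mulr_suml mulr_sumr; apply: eq_bigr => m _.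
have hk := K_gen (alpha i) a (m i) (fun z => F (upd m z)).
rewrite /= upd_id in hk.
have -> : \sum_(z : M i) Kt (m i) z * F (upd m z) =
   F m + 2 / a * \sum_(z : M i) alpha i z (m i) * (F (upd m z) - F m).
  by rewrite -hk /Kt; ring.
field; exact: lt0r_neq0.
Qed.

Definition Dj (j : nat) : R := \sum_(l < j.+2) `|bc R j.+1 l - bc R j l|.

Lemma bound t i j (F : prof -> R) (B : R) : (forall m, `|F m| <= B) ->
  `|\sum_(m : prof) nuI i j.+1 (m i) * rest t i m * F m
    - \sum_(m : prof) nuI i j (m i) * rest t i m * F m| <= B * Dj j.
Proof.
move=> hB.
have e : \sum_(m : prof) nuI i j.+1 (m i) * rest t i m * F m
    - \sum_(m : prof) nuI i j (m i) * rest t i m * F m =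
    \sum_(l < j.+2) (bc R j.+1 l - bc R j l) *
       \sum_(m : prof) muI i l (m i) * rest t i m * F m.
  rewrite -sumrB.
  under eq_bigr => m _ do rewrite -mulrBl -mulrBl (nu_diff (alpha i) (o i) a j (m i)) !mulr_suml.
  rewrite exchange_big /=; apply: eq_bigr => l _; rewrite mulr_sumr.
  by apply: eq_bigr => m _; rewrite /muI; ring.
rewrite e /Dj mulr_sumr; apply: (le_trans (ler_norm_sum _ _ _)); apply: ler_sum => l _.
rewrite normrM mulrC; apply: ler_wpM2r => //.
apply: (le_trans (ler_norm_sum _ _ _)).
have hm : forall m : prof, 0 <= muI i l (m i) * rest t i m.
  move=> m; rewrite mulr_ge0 ?rest_ge0 // /muI; by apply: mu_ge0; [exact: alpha_ge0 | exact: a_gt0 | exact: a_big].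
apply: (@le_trans _ _ (\sum_(m : prof) muI i l (m i) * rest t i m * B)).
  apply: ler_sum => m _; rewrite normrM ger0_norm //; exact: ler_wpM2l.
by rewrite -mulr_suml (marg t i (muI i l)) /muI mu_sum1 ?mul1r.
Qed.
End Ladder.

Lemma inner_sum (R : archiRealFieldType) (k : nat) (a : R) (G : 'I_k.+1 -> R) (j : 'I_k.+1) :
  \sum_(x : 'I_k.+1) G x * (if (x : nat) == j.+1 then a else 0) =
  if (j < k)%N then G (inord j.+1) * a else 0.
Proof.
case: ltnP => jk.
  rewrite (bigD1 (inord j.+1)) //= inordK // eqxx big1 ?addr0 // => x xne.
  case: eqP => [e|]; last by rewrite mulr0.
  by move: xne; rewrite -(inj_eq val_inj) /= inordK // e eqxx.
rewrite big1 // => x _; case: eqP => [e|]; last by rewrite mulr0.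
by have := ltn_ord x; rewrite e; lia.
Qed.

Section Part1.
Variables (R : archiRealFieldType) (n : nat) (M : 'I_n -> finType) (o : forall i, M i)
  (q P : 'I_n -> profile M -> R) (alpha : forall i, M i -> M i -> R) (a : R) (k : nat).
Hypothesis hmech : is_mechanism o q P.
Hypothesis alpha_ge0 : forall i x y, 0 <= alpha i x y.
Hypothesis a_gt0 : 0 < a.
Hypothesis a_big : forall i y, 2 * \sum_(x : M i) alpha i x y <= a.
Notation W := (w R n M o alpha a).
Notation prof := (profile M).
Notation lprof := (profile (Mk n k)).

Definition tof (mt : lprof) : 'I_n -> nat := fun l => nat_of_ord (mt l : 'I_k.+1).

Definition qt i (mt : lprof) : R := \sum_(m : prof) W (tof mt) m * q i m.
Definition Pt i (mt : lprof) : R := \sum_(m : prof) W (tof mt) m * P i m.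

Lemma mech_qt : is_mechanism (ok0 n k) qt Pt.
Proof.
case: hmech => hq hs ho.
have wge := w_ge0 R n M o alpha a alpha_ge0 a_gt0 a_big.
split.
- move=> i mt; apply/andP; split.
    by apply: sumr_ge0 => m _; rewrite mulr_ge0 //; case/andP: (hq i m).
  rewrite -(w_sum1 R n M o alpha a (tof mt)); apply: ler_sum => m _.
  by rewrite ler_piMr //; case/andP: (hq i m).
- move=> mt; rewrite /qt exchange_big /=.
  rewrite -(w_sum1 R n M o alpha a (tof mt)); apply: ler_sum => m _.
  by rewrite -mulr_sumr ler_piMr.
- move=> i mt hmt.
  have z : forall F : 'I_n -> prof -> R, (forall m : prof, m i = o i -> F i m = 0) ->
      \sum_(m : prof) W (tof mt) m * F i m = 0.
    move=> F hF; apply: big1 => m _.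
    rewrite (w_split R n M o alpha a _ i) /tof hmt /=.
    case: (eqVneq (m i) (o i)) => [e|ne]; first by rewrite hF // mulr0.
    by rewrite /nuI /= !mul0r.
  split; [apply: (z q) | apply: (z P)] => m e; by case: (ho i m e).
Qed.

Definition dev i v (m : prof) : R :=
  \sum_(z : M i) (util q P i v (upd m z) - util q P i v m) * alpha i z (m i).

Lemma Ut_eq i v mt : util qt Pt i v mt = \sum_(m : prof) W (tof mt) m * util q P i v m.
Proof. by rewrite /util /qt /Pt mulr_sumr -sumrB; apply: eq_bigr => m _; ring. Qed.

Lemma dev_gen i v t j :
  (\sum_(m : prof) nuI R n M o alpha a i j.+1 (m i) * rest R n M o alpha a t i m * util q P i v m
   - \sum_(m : prof) nuI R n M o alpha a i j (m i) * rest R n M o alpha a t i m * util q P i v m) * a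
  = \sum_(m : prof) nuI R n M o alpha a i j (m i) * rest R n M o alpha a t i m * dev i v m.
Proof.
rewrite (step R n M o alpha a a_gt0 t i j) mulrAC mulVf ?mul1r; last exact: lt0r_neq0.
apply: eq_bigr => m _; congr (_ * _); apply: eq_bigr => z _; exact: mulrC.
Qed.

Lemma rest_eq t t' i m : (forall l, l != i -> t' l = t l) ->
  rest R n M o alpha a t' i m = rest R n M o alpha a t i m.
Proof. by move=> h; apply: eq_bigr => l li; rewrite h. Qed.

Lemma part1_ineq v B eps : 0 <= eps -> (forall i m, `|util q P i v m| <= B) ->
  a * (B * Dj R k) <= eps -> forall mt : lprof,
  min_revenue o q P alpha v - n%:R * eps <= virtual_revenue qt Pt (alpha_succ a) v mt.
Proof.
move=> eps0 hB heps mt.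
have per : forall i, \sum_(m : prof) W (tof mt) m * (P i m + dev i v m) - eps <=
   Pt i mt + \sum_(x : Mk n k i) (util qt Pt i v (upd mt x) - util qt Pt i v mt) *
      alpha_succ a x (mt i).
  move=> i.
  rewrite /alpha_succ (inner_sum R k a (fun x => util qt Pt i v (upd mt x) - util qt Pt i v mt) (mt i)).
  have wsp : forall (t : 'I_n -> nat) (m : prof), W t m =
      nuI R n M o alpha a i (t i) (m i) * rest R n M o alpha a t i m.
    by move=> t m; exact: w_split.
  have eWd : \sum_(m : prof) W (tof mt) m * dev i v m =
     (\sum_(m : prof) nuI R n M o alpha a i (tof mt i).+1 (m i) * rest R n M o alpha a (tof mt) i m * util q P i v m
     - \sum_(m : prof) nuI R n M o alpha a i (tof mt i) (m i) * rest R n M o alpha a (tof mt) i m * util q P i v m) * a.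
    by rewrite dev_gen; apply: eq_bigr => m _; rewrite wsp.
  have eP : \sum_(m : prof) W (tof mt) m * (P i m + dev i v m) = Pt i mt +
      \sum_(m : prof) W (tof mt) m * dev i v m.
    by rewrite /Pt -big_split /=; apply: eq_bigr => m _; rewrite mulrDr.
  rewrite eP.
  case: ltnP => hk.
    set x : Mk n k i := inord (mt i).+1.
    have e1 : util qt Pt i v (upd mt x) - util qt Pt i v mt =
     \sum_(m : prof) nuI R n M o alpha a i (tof mt i).+1 (m i) * rest R n M o alpha a (tof mt) i m * util q P i v m
     - \sum_(m : prof) nuI R n M o alpha a i (tof mt i) (m i) * rest R n M o alpha a (tof mt) i m * util q P i v m.
      rewrite !Ut_eq; congr (_ - _); apply: eq_bigr => m _; rewrite !wsp.
        rewrite (rest_eq (tof mt)); last by move=> l li; rewrite /tof updO // eq_sym.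
        by rewrite /tof updE /x inordK.
      by [].
    by rewrite e1 -eWd lerBlDr lerDl.
  have hj : tof mt i = k.
    by apply/eqP; rewrite eqn_leq hk andbT /tof -ltnS ltn_ord.
  rewrite addr0.
  rewrite lerBlDr lerD2l eWd hj.
  apply: (le_trans _ heps); rewrite [X in X <= _]mulrC ler_pM2l //.
  apply: (le_trans (ler_norm _)).
  apply: (bound R n M o alpha a alpha_ge0 a_gt0 a_big (tof mt) i k (util q P i v) B).
  exact: hB.
apply: le_trans (ler_sum _ (fun i _ => per i)).
rewrite sumrB sumr_const card_ord mulr_natl lerD2r.
rewrite exchange_big /=.
have -> : \sum_(m : prof) \sum_(i < n) W (tof mt) m * (P i m + dev i v m) =
   \sum_(m : prof) W (tof mt) m * virtual_revenue q P alpha v m.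
  by apply: eq_bigr => m _; rewrite -mulr_sumr.
rewrite -[X in X <= _]mul1r -(w_sum1 R n M o alpha a (tof mt)) mulr_suml.
apply: ler_sum => m _; rewrite (mulrC (W _ m)).
have hw := w_ge0 R n M o alpha a alpha_ge0 a_gt0 a_big (tof mt) m.
rewrite -subr_ge0 (mulrC (min_revenue _ _ _ _ _)) -mulrBr mulr_ge0 // subr_ge0; exact: bigmin_le.
Qed.
End Part1.

Lemma le_sum_term (R : numDomainType) (I : finType) (F : I -> R) j :
  (forall i, 0 <= F i) -> F j <= \sum_i F i.
Proof. by move=> h; rewrite (bigD1 j) //= lerDl sumr_ge0. Qed.

Lemma part1 (R : archiRealFieldType) (n N : nat) (hN : (0 < N)%N)
  (M : 'I_n -> finType) (o : forall i, M i)
  (q P : 'I_n -> profile M -> R) (alpha : forall i, M i -> M i -> R) :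
  is_mechanism o q P -> (forall i x y, 0 <= alpha i x y) ->
  forall eps : R, 0 < eps ->
  exists (a : R) (k : nat) (qt Pt : 'I_n -> profile (Mk n k) -> R),
    [/\ 0 < a, (1 <= k)%N, is_mechanism (ok0 n k) qt Pt &
        forall v : R, inV N v -> forall mt : profile (Mk n k),
          min_revenue o q P alpha v - n%:R * eps
            <= virtual_revenue qt Pt (alpha_succ a) v mt].
Proof.
move=> hmech alpha_ge0 eps eps_gt0.
set A := \sum_(i < n) \sum_(y : M i) \sum_(x : M i) alpha i x y.
have A0 : 0 <= A by do 3! (apply: sumr_ge0 => ? _).
set a := 2 * (1 + A).
have a_gt0 : 0 < a by rewrite mulr_gt0 // ltr_pwDl.
have a_big : forall i y, 2 * \sum_(x : M i) alpha i x y <= a.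
  move=> i y; rewrite ler_pM2l //; apply: (@le_trans _ _ A); last by rewrite lerDr.
  apply: (le_trans (le_sum_term _ _ (fun y => \sum_(x : M i) alpha i x y) y _)).
    by move=> z; apply: sumr_ge0.
  apply: (le_sum_term _ _ (fun i => \sum_(y : M i) \sum_(x : M i) alpha i x y) i).
  by move=> l; do 2! (apply: sumr_ge0 => ? _).
set B := 1 + \sum_(i < n) \sum_(m : profile M) `|P i m|.
have SP0 : 0 <= \sum_(i < n) \sum_(m : profile M) `|P i m| by do 2! (apply: sumr_ge0 => ? _).
have B_gt0 : 0 < B by rewrite ltr_pwDl.
set u := a * B / eps.
have u0 : 0 <= u by apply: divr_ge0; [apply: mulr_ge0; apply: ltW | apply: ltW].
set m0 := (Num.Def.archi_bound (u ^+ 2)).+1.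
have hu : u ^+ 2 <= (m0.+1)%:R.
  apply: ltW; apply: (lt_le_trans (archi_boundP _)); first exact: sqr_ge0.
  by rewrite ler_nat; lia.
set k := (2 * m0)%N.
exists a, k, (qt R n M o q alpha a k), (qt R n M o P alpha a k); split => //.
- exact: mech_qt.
move=> v [j ->] mt.
have hv0 : 0 <= j%:R / N%:R :> R by rewrite divr_ge0.
have hv1 : j%:R / N%:R <= 1 :> R.
  by rewrite ler_pdivrMr ?ltr0n // mul1r ler_nat -ltnS.
apply: (part1_ineq R n M o q P alpha a k alpha_ge0 a_gt0 a_big _ B).
- exact: ltW.
- move=> i m; rewrite /util; apply: (le_trans (ler_normB _ _)).
  rewrite /B lerD //.
    rewrite normrM; apply: mulr_ile1 => //; rewrite ?normr_ge0 //.
      by rewrite ger0_norm.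
    by case: hmech => hq _ _; case/andP: (hq i m) => h0 h1; rewrite ger0_norm.
  apply: (le_trans (le_sum_term _ _ (fun m => `|P i m|) m (fun _ => normr_ge0 _))).
  exact: (le_sum_term _ _ (fun i => \sum_(m : profile M) `|P i m|) i (fun _ => sumr_ge0 _ (fun _ _ => normr_ge0 _))).
- rewrite /Dj /k D_eq.
  set c := (binomial (2 * m0) m0)%:R / (4 ^ m0)%:R.
  have c0 : 0 <= c by rewrite divr_ge0.
  have hc := c_bound R m0; rewrite -/c in hc.
  have huc : (u * c) ^+ 2 <= 1.
    rewrite exprMn; apply: (le_trans _ hc); rewrite mulrC; apply: ler_wpM2l => //.
    exact: sqr_ge0.
  rewrite expr_le1 // ?mulr_ge0 // in huc.
  have -> : a * (B * c) = u * c * eps by rewrite /u; field; exact: lt0r_neq0.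
  by rewrite ler_piMl // ltW.
all: rewrite ?invr_ge0 ?ler0n ?addr_ge0 //; exact: ltW.
Qed.

Section Sym.
Variables (R : archiRealFieldType) (n k : nat) (a : R) (q P : 'I_n -> profile (Mk n k) -> R) (v : R).
Notation lprof := (profile (Mk n k)).

Definition pp (s : 'S_n) (m : lprof) : lprof := finfun (fun j : 'I_n => m ((s^-1)%g j)).

Lemma pp_at s m i : pp s m (s i) = m i.
Proof. by rewrite /pp ffunE permK. Qed.

Lemma pp_upd s m i (x : 'I_k.+1) : pp s (@upd n (Mk n k) m i x) = @upd n (Mk n k) (pp s m) (s i) x.
Proof.
apply/ffunP => j; rewrite /pp /upd !ffunE.
case: (eqVneq (s i) j) => [<-|ne].
  by rewrite permK !dfwith_in.
rewrite !dfwith_out //.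
  by rewrite ffunE.
by apply: contra ne => /eqP ->; rewrite permKV.
Qed.

Definition Tterm (l : 'I_n) (m : lprof) : R :=
  P l m + \sum_(x : 'I_k.+1) (util q P l v (@upd n (Mk n k) m l x) - util q P l v m) *
     alpha_succ a x (m l).

Lemma util_sym i m : util (symmetrize q) (symmetrize P) i v m =
  (n`!%:R)^-1 * \sum_(s : 'S_n) util q P (s i) v (pp s m).
Proof.
rewrite /util /symmetrize mulrA (mulrC v) -mulrA mulr_sumr -mulrBr -sumrB.
congr (_ * _); apply: eq_bigr => s _; rewrite /pp; ring.
Qed.

Lemma rev_sym m : virtual_revenue (symmetrize q) (symmetrize P) (alpha_succ a) v m =
  (n`!%:R)^-1 * \sum_(s : 'S_n) virtual_revenue q P (alpha_succ a) v (pp s m).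
Proof.
rewrite /virtual_revenue.
have e : forall i, symmetrize P i m + \sum_(x : Mk n k i)
      (util (symmetrize q) (symmetrize P) i v (upd m x) - util (symmetrize q) (symmetrize P) i v m) *
      alpha_succ a x (m i) =
    (n`!%:R)^-1 * \sum_(s : 'S_n) Tterm (s i) (pp s m).
  move=> i; rewrite /Tterm big_split /= mulrDr; congr (_ + _).
  under eq_bigr do rewrite !util_sym -mulrBr -sumrB -mulrA mulr_suml.
  rewrite -mulr_sumr exchange_big /=; congr (_ * _); apply: eq_bigr => s _.
  apply: eq_bigr => x _; rewrite pp_upd pp_at; by [].
rewrite (eq_bigr _ (fun i _ => e i)) -mulr_sumr exchange_big /=.
congr (_ * _); apply: eq_bigr => s _.
by rewrite [RHS](reindex_inj (@perm_inj _ s)); apply: eq_bigr.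
Qed.

Lemma part2_ineq m : min_revenue (ok0 n k) q P (alpha_succ a) v <=
  virtual_revenue (symmetrize q) (symmetrize P) (alpha_succ a) v m.
Proof.
rewrite rev_sym.
have hn : (0 : R) < n`!%:R by rewrite ltr0n fact_gt0.
rewrite ler_pdivlMl //.
apply: (@le_trans _ _ (\sum_(s : 'S_n) min_revenue (ok0 n k) q P (alpha_succ a) v)).
  by rewrite sumr_const card_Sn mulr_natl.
apply: ler_sum => s _; exact: bigmin_le.
Qed.
End Sym.

Theorem mainTheorem6 (R : archiRealFieldType) (n N : nat) (hN : (0 < N)%N) :
  (forall (M : 'I_n -> finType) (o : forall i, M i)
          (q P : 'I_n -> profile M -> R) (alpha : forall i, M i -> M i -> R),
      is_mechanism o q P ->
      (forall i x y, 0 <= alpha i x y) ->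
      forall eps : R, 0 < eps ->
      exists (a : R) (k : nat) (qt Pt : 'I_n -> profile (Mk n k) -> R),
        [/\ 0 < a, (1 <= k)%N, is_mechanism (ok0 n k) qt Pt &
            forall v : R, inV N v -> forall mt : profile (Mk n k),
              min_revenue o q P alpha v - n%:R * eps
                <= virtual_revenue qt Pt (alpha_succ a) v mt])
  /\
  (forall (k : nat) (a : R) (q P : 'I_n -> profile (Mk n k) -> R),
      0 < a -> is_mechanism (ok0 n k) q P ->
      forall v : R, inV N v -> forall m : profile (Mk n k),
        min_revenue (ok0 n k) q P (alpha_succ a) v
          <= virtual_revenue (symmetrize q) (symmetrize P) (alpha_succ a) v m).
Proof.
split.
  move=> M o q P alpha hm ha eps he.
  exact: (part1 R n N hN M o q P alpha hm ha eps he).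
move=> k a q P _ _ v _ m.
exact: (part2_ineq R n k a q P v m).
Qed.
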